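(* Assume (A1)–(A4), let $x_1\in R\mathbb{B}$, and run the Algorithm with $\eta>0$ and $\rho\in[0,\epsilon]$. Then for every $t\in[T]$ with $t<T$, $$\mathrm{dist}(x_{t+1},\mathcal{X}_\rho)\le\sqrt{\gamma}\,\mathrm{dist}(x_t,\mathcal{X}_\rho)+\eta G_f .$$ Consequently, for all such $t$, $$\mathrm{dist}(x_{t+1},\mathcal{X}_\rho)\le\gamma^{t/2}\,\mathrm{dist}(x_1,\mathcal{X}_\rho)+\frac{\eta G_f}{1-\sqrt{\gamma}} .$$
   Context: Let $d,T$ be positive integers and $[T]=\{1,\dots,T\}$. Write $\|\cdot\|$ for the Euclidean norm and $\mathbb{B}=\{x\in\mathbb{R}^d:\|x\|\le1\}$. For a closed convex set $\mathcal{Y}$, $\Pi_{\mathcal{Y}}$ is the Euclidean projection onto $\mathcal{Y}$ and $\mathrm{dist}(z,\mathcal{Y})=\min_{y\in\mathcal{Y}}\|z-y\|$. For $a\in\mathbb{R}$, $[a]_+=\max(a,0)$. Let $g:\mathbb{R}^d\to\mathbb{R}$ be convex with subdifferential $\partial g(x)$. Set $\mathcal{X}=\{x:g(x)\le0\}$, and for $\rho\ge0$ set $\mathcal{X}_\rho=\{x:g(x)\le-\rho\}$. Assumptions: (A1) there is $R>0$ with $\mathcal{X}\subseteq R\mathbb{B}$; (A2) $f_1,\dots,f_T:\mathbb{R}^d\to\mathbb{R}$ are convex and differentiable, and there is $G_f>0$ with $\|\nabla f_t(x)\|\le G_f$ for all $x\in R\mathbb{B}$ and all $t\in[T]$; (A3)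 there is $G_g>0$ with $\|s\|\le G_g$ for all $s\in\partial g(x)$ and all $x\in R\mathbb{B}$; (A4) there are $\sigma,\epsilon>0$ such that $\mathcal{X}'=\{x:g(x)=-\epsilon\}$ is nonempty and $\|s\|\ge\sigma$ for all $s\in\partial g(x)$ and all $x\in\mathcal{X}'$. Algorithm (OGD with Polyak feasibility steps). Inputs are $x_1\in\mathbb{R}^d$, $\eta>0$ and $\rho\ge0$. For $t=1,\dots,T$: - play $x_t$ and then receive $f_t$; the functions may be chosen adversarially and may depend on past actions; - query $g_t=g(x_t)$ and some $s_t\in\partial g(x_t)$; - set $y_t=x_t-\eta\nabla f_t(x_t)$; - if $s_t\ne0$, set $x_{t+1}=\Pi_{R\mathbb{B}}\big(y_t-\frac{[g_t+s_t^\top(y_t-x_t)+\rho]_+}{\|s_t\|^2}s_t\big)$; if $s_t=0$, set $x_{t+1}=\Pi_{R\mathbb{B}}(y_t)$. Also $\gamma=1-\sigma^2/G_g^2$. *)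

(* Defs.v *)
From HB Require Import structures.
From mathcomp Require Import all_boot all_order all_algebra.
From mathcomp Require Import boolp classical_sets reals.
Set Implicit Arguments. Unset Strict Implicit. Unset Printing Implicit Defensive.
Import Order.TTheory GRing.Theory Num.Theory.
Local Open Scope ring_scope.
Local Open Scope classical_set_scope.

Section Defs.
Variables (R : realType) (d : nat).
Notation vec := 'rV[R]_d.

Definition dotp (u v : vec) : R := \sum_(i < d) u 0 i * v 0 i.
Definition enorm (u : vec) : R := Num.sqrt (dotp u u).

Definition dist (z : vec) (Y : set vec) : R := inf [set enorm (z - y) | y in Y].

Definition pos_part (a : R) : R := Num.max a 0.

Definition ball_set (Rad : R) : set vec := [set x | enorm x <= Rad].

Definition is_proj (Y : set vec) (z p : vec) : Prop :=
  Y p /\ forall y, Y y -> enorm (z - p) <= enorm (z - y).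

Definition convex_fun (f : vec -> R) : Prop :=
  forall (x y : vec) (l : R), 0 <= l <= 1 ->
    f (l *: x + (1 - l) *: y) <= l * f x + (1 - l) * f y.

Definition subgrad (g : vec -> R) (x s : vec) : Prop :=
  forall y, g x + dotp s (y - x) <= g y.

Definition is_gradient (f : vec -> R) (x v : vec) : Prop :=
  forall e : R, 0 < e -> exists2 del : R, 0 < del &
    forall h : vec, enorm h < del ->
      `|f (x + h) - f x - dotp v h| <= e * enorm h.

Definition differentiable_fun (f : vec -> R) : Prop :=
  forall x, exists v, is_gradient f x v.

Definition sublevel (g : vec -> R) (rho : R) : set vec := [set x | g x <= - rho].

(* one step of OGD with Polyak feasibility step, before projection *)
Definition polyak_pre (g : vec -> R) (eta rho : R) (x gf s : vec) : vec :=
  let y := x - eta *: gf in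
  if s != 0 then y - (pos_part (g x + dotp s (y - x) + rho) / (dotp s s)) *: s
  else y.

End Defs.

(* Main.v *)
Require Import Defs.
From HB Require Import structures.
From mathcomp Require Import all_boot all_order all_algebra.
From mathcomp Require Import boolp classical_sets reals.
From mathcomp Require Import ring lra.
Import Order.TTheory GRing.Theory Num.Theory.
Local Open Scope ring_scope.
Local Open Scope classical_set_scope.

Module Helpers.
Set Implicit Arguments. Unset Strict Implicit. Unset Printing Implicit Defensive.


Section Aux.
Variables (R : realType) (d : nat).
Local Notation vec := 'rV[R]_d.
Implicit Types u v w : vec.

Lemma dotpC u v : dotp u v = dotp v u.
Proof. by apply: eq_bigr => i _; rewrite mulrC. Qed.

Lemma dotpDl u v w : dotp (u + v) w = dotp u w + dotp v w.
Proof. by rewrite /dotp -big_split; apply: eq_bigr => i _; rewrite !mxE mulrDl. Qed.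

Lemma dotpZl a u v : dotp (a *: u) v = a * dotp u v.
Proof. by rewrite /dotp mulr_sumr; apply: eq_bigr => i _; rewrite !mxE mulrA. Qed.

Lemma dotpNl u v : dotp (- u) v = - dotp u v.
Proof. by rewrite -scaleN1r dotpZl mulN1r. Qed.

Lemma dotpBl u v w : dotp (u - v) w = dotp u w - dotp v w.
Proof. by rewrite dotpDl dotpNl. Qed.

Lemma dotpDr u v w : dotp w (u + v) = dotp w u + dotp w v.
Proof. by rewrite !(dotpC w) dotpDl. Qed.
Lemma dotpZr a u v : dotp v (a *: u) = a * dotp v u.
Proof. by rewrite !(dotpC v) dotpZl. Qed.
Lemma dotpNr u v : dotp v (- u) = - dotp v u.
Proof. by rewrite !(dotpC v) dotpNl. Qed.
Lemma dotpBr u v w : dotp w (u - v) = dotp w u - dotp w v.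
Proof. by rewrite !(dotpC w) dotpBl. Qed.
Lemma dotp0l v : dotp 0 v = 0.
Proof. by rewrite -(scale0r 0) dotpZl mul0r. Qed.
Lemma dotp0r v : dotp v 0 = 0.
Proof. by rewrite dotpC dotp0l. Qed.

Lemma dotp_ge0 u : 0 <= dotp u u.
Proof. by apply: sumr_ge0 => i _; rewrite -expr2 sqr_ge0. Qed.

Lemma dotp_eq0 u : dotp u u = 0 -> u = 0.
Proof.
move=> /eqP; rewrite /dotp psumr_eq0; last by move=> i _; rewrite -expr2 sqr_ge0.
move=> /allP H; apply/rowP => i; rewrite mxE.
by have := H i (mem_index_enum _); rewrite -expr2 sqrf_eq0 => /eqP.
Qed.

Lemma enorm_ge0 u : 0 <= enorm u.
Proof. exact: sqrtr_ge0. Qed.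

Lemma enorm_sq u : enorm u ^+ 2 = dotp u u.
Proof. by rewrite /enorm sqr_sqrtr // dotp_ge0. Qed.

Lemma enorm_le u v : (enorm u <= enorm v) = (dotp u u <= dotp v v).
Proof. by rewrite /enorm ler_sqrt // dotp_ge0. Qed.

Lemma cauchy_schwarz u v : dotp u v <= enorm u * enorm v.
Proof.
have [->|v0] := eqVneq v 0.
  by rewrite dotp0r /enorm dotp0r sqrtr0 mulr0.
have vp : 0 < dotp v v.
  rewrite lt_neqAle dotp_ge0 andbT; apply/eqP => /esym /dotp_eq0 /eqP.
  by rewrite (negbTE v0).
have key : 0 <= dotp (u - (dotp u v / dotp v v) *: v) (u - (dotp u v / dotp v v) *: v).
  exact: dotp_ge0.
rewrite !(dotpBl, dotpBr, dotpZl, dotpZr) (dotpC v u) in key.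
have key2 : dotp u v ^+ 2 <= dotp u u * dotp v v.
  move: key; set a := dotp u v; set b := dotp v v; set c := dotp u u => key.
  have : 0 <= (c * b - a ^+ 2) / b.
    apply: le_trans key _; rewrite le_eqVlt; apply/orP; left; apply/eqP.
    by field; rewrite gt_eqF.
  by rewrite pmulr_lge0 ?invr_gt0 // subr_ge0.
have [uv0|uv0] := lerP (dotp u v) 0.
  by apply: le_trans uv0 _; rewrite mulr_ge0 ?enorm_ge0.
rewrite -(ler_pXn2r (n:=2)) //; last by rewrite nnegrE mulr_ge0 ?enorm_ge0.
  by rewrite exprMn !enorm_sq.
by rewrite nnegrE ltW.
Qed.

Lemma enormD u v : enorm (u + v) <= enorm u + enorm v.
Proof.
rewrite -(ler_pXn2r (n:=2)) // ?nnegrE ?addr_ge0 ?enorm_ge0 //.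
rewrite enorm_sq !(dotpDl, dotpDr) sqrrD !enorm_sq (dotpC v u).
have := cauchy_schwarz u v; lra.
Qed.

Lemma enormZ a u : enorm (a *: u) = `|a| * enorm u.
Proof.
rewrite /enorm dotpZl dotpZr mulrA -expr2 sqrtrM ?sqr_ge0 //.
by rewrite sqrtr_sqr.
Qed.

Lemma enormN u : enorm (- u) = enorm u.
Proof. by rewrite -scaleN1r enormZ normrN normr1 mul1r. Qed.

Lemma enormB u v : enorm (u - v) = enorm (v - u).
Proof. by rewrite -enormN opprB. Qed.

Lemma enorm0 : enorm (0 : vec) = 0.
Proof. by rewrite /enorm dotp0r sqrtr0. Qed.

End Aux.
Ltac dexp := rewrite ?(dotpDl, dotpDr, dotpZl, dotpZr, dotpBl, dotpBr, dotpNl, dotpNr).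


Section Dist.
Variables (R : realType) (d : nat).
Local Notation vec := 'rV[R]_d.
Implicit Types u v w z : vec.
Implicit Types Y : set vec.

Lemma dist_set_lb z Y : has_lbound [set enorm (z - y) | y in Y].
Proof. by exists 0 => _ [y _ <-]; exact: enorm_ge0. Qed.

Lemma dist_le z Y y : Y y -> dist z Y <= enorm (z - y).
Proof. by move=> Yy; apply: ge_inf; [exact: dist_set_lb | exists y]. Qed.

Lemma dist_lb z Y c : Y !=set0 -> (forall y, Y y -> c <= enorm (z - y)) -> c <= dist z Y.
Proof.
move=> [y0 Y0] H; apply: lb_le_inf; first by exists (enorm (z - y0)), y0.
by move=> _ [y Yy <-]; exact: H.
Qed.

Lemma dist_ge0 z Y : Y !=set0 -> 0 <= dist z Y.
Proof. by move=> Yn; apply: dist_lb => // y _; exact: enorm_ge0. Qed.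

Lemma dist_approx z Y e : Y !=set0 -> 0 < e ->
  exists y, Y y /\ enorm (z - y) < dist z Y + e.
Proof.
move=> [y0 Y0] e0.
have [_ [y Yy <-] H] := inf_adherent e0 (conj (ex_intro _ _ (ex_intro2 _ _ y0 Y0 erefl)) (dist_set_lb z Y)).
by exists y.
Qed.

Lemma dist_mem z Y : Y z -> dist z Y = 0.
Proof.
move=> Yz; apply/eqP; rewrite eq_le dist_ge0; last by exists z.
by rewrite andbT; have := dist_le z Yz; rewrite subrr enorm0.
Qed.

Lemma dist_transfer (a b : vec) Y c : Y !=set0 ->
  (forall y, Y y -> enorm (a - y) <= enorm (b - y) + c) -> dist a Y <= dist b Y + c.
Proof.
move=> Yn H; rewrite -lerBlDr; apply: dist_lb => // y Yy.
rewrite lerBlDr; have h1 := dist_le a Yy; have h2 := H _ Yy; exact: (le_trans h1 h2).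
Qed.

End Dist.


Section Proj.
Variables (R : realType) (d : nat).
Local Notation vec := 'rV[R]_d.
Implicit Types u v w z : vec.

Lemma enorm_leR u (r : R) : 0 <= r -> (enorm u <= r) = (dotp u u <= r ^+ 2).
Proof.
move=> r0; rewrite -(ler_pXn2r (n:=2)) // ?nnegrE ?enorm_ge0 //.
by rewrite enorm_sq.
Qed.


Lemma proj_ball_nonexp (Rad : R) z P q : is_proj (ball_set Rad) z P ->
  enorm q <= Rad -> enorm (P - q) <= enorm (z - q).
Proof.
move=> [BP Pmin] Bq.
have R0 : 0 <= Rad by apply: le_trans (enorm_ge0 _) Bq.
rewrite /ball_set /= in BP.
have [dd Hq] : exists dd, q = P + dd by exists (q - P); rewrite addrC subrK.
have [e Hz] : exists e, z = P + e by exists (z - P); rewrite addrC subrK.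
subst q z.
have Ce := dotpC e dd; have CP := dotpC P dd; have CPe := dotpC P e.
have dd0 := dotp_ge0 dd.
have key : forall l : R, 0 < l -> l < 1 -> 2 * dotp e dd <= l * dotp dd dd.
  move=> l l0 l1.
  have BQ : enorm (P + l *: dd) <= Rad.
    rewrite enorm_leR //; move: BP Bq; rewrite !enorm_leR //.
    have hh : 0 <= l * (1 - l) * dotp dd dd by rewrite !mulr_ge0 // ?subr_ge0 ltW.
    dexp; nra.
  have := Pmin _ BQ; rewrite enorm_le.
  have -> : P + e - (P + l *: dd) = e - l *: dd by rewrite opprD addrACA subrr add0r.
  have -> : P + e - P = e by rewrite addrC addKr.
  dexp; nra.
have ed : dotp e dd <= 0.
  rewrite leNgt; apply/negP => a0.
  set a := dotp e dd in a0 key *; set b := dotp dd dd in dd0 key *.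
  have ab : 0 < 2 * a + b by lra.
  have l0 : 0 < a / (2 * a + b) by rewrite divr_gt0.
  have l1 : a / (2 * a + b) < 1 by rewrite ltr_pdivrMr // mul1r; lra.
  have H := key _ l0 l1.
  have : a / (2 * a + b) * b <= a.
    rewrite mulrAC ler_pdivrMr //; nra.
  lra.
rewrite enorm_le.
have -> : P + e - (P + dd) = e - dd by rewrite opprD addrACA subrr add0r.
have -> : P - (P + dd) = - dd by rewrite opprD addrA subrr add0r.
dexp.
have := dotp_ge0 e; lra.
Qed.

End Proj.


Section Polyak.
Variables (R : realType) (d : nat).
Local Notation vec := 'rV[R]_d.
Implicit Types u v w z x y p s : vec.


Lemma pos_part_ge0 (a : R) : 0 <= pos_part a.
Proof. by rewrite /pos_part le_max lexx orbT. Qed.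

Lemma pos_partE (a : R) : (0 <= a -> pos_part a = a) /\ (a <= 0 -> pos_part a = 0).
Proof. by rewrite /pos_part; split => h; [rewrite max_l | rewrite max_r]. Qed.

Lemma pos_part_diff (u v : R) :
  (pos_part (u + v) - pos_part u) ^+ 2 <= (pos_part (u + v) - pos_part u) * v.
Proof.
have [h1|h1] := lerP (u + v) 0; have [h2|h2] := lerP u 0.
- rewrite ((pos_partE _).2 h1) ((pos_partE _).2 h2); lra.
- rewrite ((pos_partE _).2 h1) ((pos_partE _).1 (ltW h2)); nra.
- rewrite ((pos_partE _).1 (ltW h1)) ((pos_partE _).2 h2); nra.
- rewrite ((pos_partE _).1 (ltW h1)) ((pos_partE _).1 (ltW h2)); nra.
Qed.

Lemma halfspace_nonexp (a : R) x y s : 0 < dotp s s ->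
  enorm ((y - (pos_part (a + dotp s (y - x)) / dotp s s) *: s)
         - (x - (pos_part a / dotp s s) *: s)) <= enorm (y - x).
Proof.
move=> S0.
set m := pos_part (a + dotp s (y - x)) - pos_part a.
have -> : (y - (pos_part (a + dotp s (y - x)) / dotp s s) *: s)
         - (x - (pos_part a / dotp s s) *: s) = (y - x) - (m / dotp s s) *: s.
  rewrite /m mulrBl scalerBl; set A := _ *: s; set B := _ *: s.
  by rewrite opprD opprK addrACA opprB [B - A]addrC.
rewrite enorm_le.
have hm := pos_part_diff a (dotp s (y - x)); rewrite -/m in hm.
move: (y - x) m hm => dl m hm.
have Em : m = (m / dotp s s) * dotp s s by rewrite divfK // gt_eqF.
move: (m / dotp s s) Em => c Em; rewrite Em in hm.
have C := dotpC s dl.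
have hc : c ^+ 2 * dotp s s <= c * dotp s dl.
  have : (c ^+ 2 * dotp s s) * dotp s s <= (c * dotp s dl) * dotp s s.
    have -> : c ^+ 2 * dotp s s * dotp s s = (c * dotp s s) ^+ 2 by ring.
    by have -> : c * dotp s dl * dotp s s = c * dotp s s * dotp s dl by ring.
  by rewrite ler_pM2r.
have hc0 : 0 <= c ^+ 2 * dotp s s by rewrite mulr_ge0 ?sqr_ge0 ?ltW.
dexp; nra.
Qed.

Lemma polyak_contr (g : vec -> R) (rho : R) x s p : 0 < dotp s s ->
  subgrad g x s -> g p <= - rho ->
  dotp (x - (pos_part (g x + rho) / dotp s s) *: s - p)
       (x - (pos_part (g x + rho) / dotp s s) *: s - p)
  <= dotp (x - p) (x - p) - pos_part (g x + rho) ^+ 2 / dotp s s.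
Proof.
move=> S0 sg gp.
have hs := sg p.
have -> : x - (pos_part (g x + rho) / dotp s s) *: s - p
        = (x - p) - (pos_part (g x + rho) / dotp s s) *: s.
  by rewrite addrAC.
have b : g x + rho <= dotp s (x - p).
  have -> : x - p = - (p - x) by rewrite opprB.
  rewrite dotpNr; lra.
set a := g x + rho in b *.
move: (x - p) b => q b.
have C := dotpC s q.
have [a0|a0] := lerP a 0.
  rewrite ((pos_partE _).2 a0) mul0r scale0r subr0 expr0n /= mul0r subr0 //.
rewrite ((pos_partE _).1 (ltW a0)).
dexp.
have E : a ^+ 2 / dotp s s = a / dotp s s * a by rewrite expr2 mulrAC.
have E2 : a / dotp s s * (a / dotp s s * dotp s s) = a / dotp s s * a by rewrite divfK // gt_eqF.
rewrite E mulrN E2.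
have c0 : 0 < a / dotp s s by rewrite divr_gt0.
nra.
Qed.

End Polyak.


Section Box.
Variables (R : realType) (d : nat).
Local Notation vec := 'rV[R]_d.
Implicit Types u v w z x y p s h : vec.

Lemma box_bound (g : vec -> R) (del : R) : convex_fun g -> 0 < del ->
  forall k y, exists M, forall h, (forall j : 'I_d, (k <= j)%N -> h 0 j = 0) ->
    (forall j, `|h 0 j| <= del) -> g (y + h) <= M.
Proof.
move=> cg d0; elim=> [|k IH] y.
  exists (g y) => h h0 _.
  have -> : h = 0 by apply/rowP => j; rewrite h0 // mxE.
  by rewrite addr0.
have [kd|kd] := ltnP k d; last first.
  have [M HM] := IH y; exists M => h h0 hb; apply: HM => // j; rewrite leqNgt.
  by rewrite (leq_trans (ltn_ord j) kd).
pose jk := Ordinal kd.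
pose e : vec := \row_j (if j == jk then del else 0).
have [M1 H1] := IH (y + e); have [M2 H2] := IH (y - e).
exists (Num.max M1 M2) => h h0 hb.
pose h' : vec := \row_j (if j == jk then 0 else h 0 j).
have h'0 : forall j : 'I_d, (k <= j)%N -> h' 0 j = 0.
  move=> j; rewrite mxE; case: eqP => // /eqP njk kj; apply: h0.
  by rewrite ltn_neqAle kj andbT eq_sym; apply: contra njk => /eqP e1; apply/eqP/val_inj.
have h'b : forall j, `|h' 0 j| <= del.
  by move=> j; rewrite mxE; case: eqP => _ //; rewrite normr0 ltW.
set c := h 0 jk.
have cb : `|c| <= del := hb jk.
set l := (del + c) / (2 * del).
have l01 : 0 <= l <= 1.
  move: cb; rewrite ler_norml => /andP [cb1 cb2].
  by apply/andP; split; rewrite /l ?divr_ge0 ?ler_pdivrMr ?mul1r; lra.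
have -> : y + h = l *: (y + e + h') + (1 - l) *: (y - e + h').
  apply/rowP => j; rewrite !mxE; case: eqP => [->|_].
    rewrite /l /c; field; lra.
  by rewrite addr0 subr0 -mulrDl subrKC mul1r.
apply: (le_trans (cg _ _ _ l01)).
have := H1 _ h'0 h'b; have := H2 _ h'0 h'b.
move: l01 => /andP [la lb].
have mx1 : M1 <= Num.max M1 M2 by rewrite le_max lexx.
have mx2 : M2 <= Num.max M1 M2 by rewrite le_max lexx orbT.
nra.
Qed.

Lemma convex_local (g : vec -> R) z0 : convex_fun g -> exists M,
  forall (t : R) h, 0 < t -> t <= 1 -> (forall j, `|h 0 j| <= t) ->
  `|g (z0 + h) - g z0| <= t * (M - g z0).
Proof.
move=> cg; have [M HM] := box_bound cg ltr01 d z0.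
have HM' : forall h, (forall j, `|h 0 j| <= 1) -> g (z0 + h) <= M.
  by move=> h hb; apply: HM => // j; rewrite leqNgt ltn_ord.
exists M => t h t0 t1 hb.
have hb' : forall j, `|(t^-1 *: h) 0 j| <= 1.
  by move=> j; rewrite mxE normrM gtr0_norm ?invr_gt0 // ler_pdivrMl // mulr1.
have hb'' : forall j, `|(- (t^-1 *: h)) 0 j| <= 1.
  by move=> j; rewrite mxE normrN hb'.
have A1 := HM' _ hb'; have A2 := HM' _ hb''.
have tn : t != 0 by rewrite gt_eqF.
have up : g (z0 + h) <= t * M + (1 - t) * g z0.
  have -> : z0 + h = t *: (z0 + t^-1 *: h) + (1 - t) *: z0.
    by apply/rowP => j; rewrite !mxE; field.
  apply: le_trans (cg _ _ _ _) _; first by rewrite t1 ltW.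
  by rewrite lerD2r ler_pM2l.
have lo : g z0 <= (1 + t)^-1 * g (z0 + h) + (1 - (1 + t)^-1) * M.
  have t1n : 1 + t != 0 by rewrite gt_eqF // ltr_wpDr // ltW.
  have E0 : (1 + t)^-1 *: (z0 + h) + (1 - (1 + t)^-1) *: (z0 + - (t^-1 *: h)) = z0.
    by apply/rowP => j; rewrite !mxE; field; rewrite tn t1n.
  have l01 : 0 <= (1 + t)^-1 <= 1.
    have tp : 0 < 1 + t by lra.
    by apply/andP; split; [rewrite invr_ge0 ltW | rewrite invf_le1 //; lra].
  have := cg (z0 + h) (z0 + - (t^-1 *: h)) _ l01; rewrite E0 => H.
  apply: le_trans H _.
  rewrite lerD2l ler_wpM2l // subr_ge0; by case/andP: l01.
have E : (1 + t)^-1 * (1 + t) = 1 by rewrite mulVf // gt_eqF // ltr_wpDr // ltW.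
have lp : 0 < (1 + t)^-1 by rewrite invr_gt0 ltr_wpDr // ltW.
have tp : 0 < 1 + t by lra.
have lo2 : (1 + t) * g z0 <= g (z0 + h) + t * M.
  have e1 : (1 + t) * ((1 + t)^-1 * g (z0 + h) + (1 - (1 + t)^-1) * M)
            = g (z0 + h) + t * M by field; rewrite gt_eqF.
  by rewrite -e1 ler_pM2l.
rewrite ler_norml; apply/andP; split; lra.
Qed.

End Box.


Section EB.
Variables (R : realType) (d : nat).
Local Notation vec := 'rV[R]_d.
Implicit Types u v w z x y p s h : vec.

Lemma error_bound_eps (g : vec -> R) (eps sigma : R) x p : convex_fun g ->
  - eps < g x -> g p <= - eps ->
  (forall z, g z <= - eps -> enorm (x - p) <= enorm (x - z)) ->
  (forall y v, g y = - eps -> subgrad g y v -> sigma <= enorm v) ->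
  sigma * enorm (x - p) <= g x + eps.
Proof.
move=> cg gx gp pmin A4.
have [u Hu] : exists u, x = p + u by exists (x - p); rewrite addrC subrK.
subst x.
have xpu : p + u - p = u by rewrite addrC addKr.
rewrite xpu in pmin *.
have u0 : 0 < dotp u u.
  rewrite lt_neqAle dotp_ge0 andbT; apply/eqP => /esym /dotp_eq0 u0.
  by move: gx; rewrite u0 addr0; lra.
have gpe : g p = - eps.
  apply/eqP; rewrite eq_le gp /=; rewrite leNgt; apply/negP => gpl.
  set t := (- eps - g p) / (g (p + u) - g p).
  have den : 0 < g (p + u) - g p by lra.
  have t0 : 0 < t by rewrite divr_gt0 //; lra.
  have t1 : t < 1 by rewrite ltr_pdivrMr // mul1r; lra.
  have t01 : 0 <= t <= 1 by rewrite ltW // ltW.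
  have := cg (p + u) p t t01.
  have E : t * g (p + u) + (1 - t) * g p = - eps.
    rewrite /t; field; lra.
  rewrite E => /pmin.
  have -> : p + u - (t *: (p + u) + (1 - t) *: p) = (1 - t) *: u.
    by apply/rowP => j; rewrite !mxE; ring.
  rewrite enormZ ger0_norm; last lra.
  have : 0 < enorm u by rewrite /enorm sqrtr_gt0.
  nra.
pose q h := g (p + h) - g p.
have qconv : forall h1 h2 l, 0 <= l <= 1 -> q (l *: h1 + (1 - l) *: h2) <= l * q h1 + (1 - l) * q h2.
  move=> h1 h2 l l01; rewrite /q.
  have := cg (p + h1) (p + h2) l l01.
  have -> : l *: (p + h1) + (1 - l) *: (p + h2) = p + (l *: h1 + (1 - l) *: h2).
    by apply/rowP => j; rewrite !mxE; ring.
  lra.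
have F1 : forall h, 0 < dotp u h -> 0 < q h.
  move=> h b0.
  have H0 := dotp_ge0 h.
  set t := dotp u h / (dotp h h + dotp u h).
  have den : 0 < dotp h h + dotp u h by lra.
  have t0 : 0 < t by rewrite divr_gt0.
  have t1 : t <= 1 by rewrite ler_pdivrMr // mul1r; lra.
  have tH : t * dotp h h < dotp u h.
    rewrite /t mulrAC ltr_pdivrMr //; nra.
  have gz : - eps < g (p + t *: h).
    rewrite ltNge; apply/negP => /pmin.
    rewrite enorm_le.
    have -> : p + u - (p + t *: h) = u - t *: h by rewrite opprD addrACA subrr add0r.
    have C := dotpC h u.
    dexp; nra.
  have := qconv h 0 t; rewrite t1 ltW //= => /(_ isT).
  rewrite scaler0 addr0 /q addr0 subrr mulr0 addr0; nra.
have F2 : forall h, dotp u h = 0 -> 0 <= q h.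
  move=> h uh; rewrite leNgt; apply/negP => qh.
  set Q := `|q (h + u)| + 1.
  have Q0 : 0 < Q by rewrite ltr_pwDr.
  have QQ : q (h + u) <= Q by rewrite /Q; have := ler_norm (q (h + u)); lra.
  set dl := - q h / (- q h + Q).
  have den : 0 < - q h + Q by lra.
  have dl0 : 0 < dl by rewrite divr_gt0 //; lra.
  have dl1 : dl < 1 by rewrite ltr_pdivrMr // mul1r; lra.
  have := qconv (h + u) h dl; rewrite ltW //= ltW //= => /(_ isT).
  have -> : dl *: (h + u) + (1 - dl) *: h = h + dl *: u.
    by apply/rowP => j; rewrite !mxE; ring.
  have pos := F1 (h + dl *: u).
  rewrite dotpDr dotpZr uh add0r in pos.
  have := pos (mulr_gt0 dl0 u0).
  have E : (1 - dl) * q h + dl * Q = 0 by rewrite /dl; field; lra.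
  nra.
set S := [set r : R | exists h, 0 < dotp u h /\ r = q h / dotp u h].
have Sn : S !=set0.
  by exists (q u / dotp u u), u.
have Slb : lbound S 0.
  by move=> r [h [hp ->]]; rewrite divr_ge0 ?ltW // F1.
have Shl : has_lbound S by exists 0.
set mu := inf S.
have mu0 : 0 <= mu by apply: lb_le_inf.
have sg : forall h, mu * dotp u h <= q h.
  move=> h.
  have [hp|hn|hz] := ltgtP 0 (dotp u h).
  - have : mu <= q h / dotp u h by apply: ge_inf => //; exists h.
    by rewrite ler_pdivlMr // mulrC.
  - have : q h / dotp u h <= mu.
      apply: lb_le_inf => // r [h' [h'p ->]].
      set a := dotp u h in hn *; set b := dotp u h' in h'p *.
      have ba : 0 < b - a by lra.
      set l := b / (b - a).
      have l01 : 0 <= l <= 1.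
        by apply/andP; split; [rewrite divr_ge0 // ltW | rewrite ler_pdivrMr // mul1r; lra].
      have := qconv h h' l l01.
      have := F2 (l *: h + (1 - l) *: h').
      rewrite dotpDr !dotpZr -/a -/b.
      have -> : l * a + (1 - l) * b = 0 by rewrite /l; field; lra.
      move=> /(_ erefl) H1 H2.
      have H3 : 0 <= b * q h - a * q h'.
        have e : l * q h + (1 - l) * q h' = (b * q h - a * q h') / (b - a).
          by rewrite /l; field; lra.
        move: (le_trans H1 H2); rewrite e.
        by rewrite pmulr_lge0 // invr_gt0.
      rewrite ler_ndivrMr // mulrAC ler_pdivrMr //; nra.
    by rewrite ler_ndivrMr // mulrC.
  - by rewrite -hz mulr0 /q; apply: F2.
have sub : subgrad g p (mu *: u).
  move=> y; have := sg (y - p); rewrite /q subrKC dotpZl; lra.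
have hs := A4 _ _ gpe sub.
rewrite enormZ ger0_norm // in hs.
have := sg u; rewrite /q gpe.
have -> : dotp u u = enorm u * enorm u by rewrite -expr2 enorm_sq.
have := enorm_ge0 u.
nra.
Qed.

End EB.

End Helpers.
From mathcomp Require Import topology normedtype derive.
Module Helpers2.
Import Helpers.
Import numFieldNormedType.Exports.
Import Num.Def.
Set Implicit Arguments. Unset Strict Implicit. Unset Printing Implicit Defensive.
Ltac dexp := rewrite ?(dotpDl, dotpDr, dotpZl, dotpZr, dotpBl, dotpBr, dotpNl, dotpNr).


Section Topo.
Variables (R : realType) (d : nat).
Local Notation vec := 'rV[R]_d.
Implicit Types u v w z x y p s : vec.



Lemma coord_le_norm z (j : 'I_d) : `|z 0 j| <= `|z|.
Proof.
rewrite [leRHS]/normr /= mx_normrE.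
by apply: (le_trans _ (le_bigmax _ _ (ord0, j))).
Qed.

Lemma norm_le_enorm z : `|z| <= enorm z.
Proof.
rewrite [leLHS]/normr /= mx_normrE; apply: bigmax_le; first exact: enorm_ge0.
move=> [i j] _ /=; rewrite (ord1 i).
rewrite -(ler_pXn2r (n:=2)) // ?nnegrE ?enorm_ge0 // enorm_sq real_normK ?num_real //.
rewrite /dotp (bigD1 j) //= expr2 lerDl; apply: sumr_ge0 => k _; rewrite -expr2 sqr_ge0 //.
Qed.

Lemma cont_of_eps (F : vec -> R) :
  (forall z0 e, 0 < e -> exists2 del, 0 < del & forall z, `|z0 - z| < del -> `|F z0 - F z| <= e) ->
  continuous F.
Proof.
move=> H z0; apply/(@cvgrPdist_le _ _ _ (nbhs z0) (nbhs_filter z0)) => e e0; have [del del0 Hd] := H z0 e e0.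
apply/nbhs_ballP; exists del => // z; rewrite -ball_normE /= => hz; exact: Hd.
Qed.

Lemma enorm_le_norm u : enorm u <= d%:R * `|u|.
Proof.
rewrite enorm_leR ?mulr_ge0 //.
apply: (@le_trans _ _ (\sum_(i < d) `|u| ^+ 2)).
  apply: ler_sum => i _; rewrite -expr2 -real_normK ?num_real //.
  by rewrite ler_pXn2r ?nnegrE // coord_le_norm.
rewrite sumr_const card_ord -[_ *+ d]mulr_natl exprMn ler_wpM2r ?sqr_ge0 //.
rewrite expr2 -natrM ler_nat; case: d => // n; rewrite mulSn leq_addr //.
Qed.

Lemma cont_enorm x : continuous (fun z => enorm (x - z)).
Proof.
apply: cont_of_eps => z0 e e0.
exists (e / (d%:R + 1)); first by rewrite divr_gt0 // ltr_wpDl.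
move=> z hz.
have H1 : enorm (x - z0) <= enorm (x - z) + enorm (z - z0).
  by have := enormD (x - z) (z - z0); rewrite addrA subrK.
have H2 : enorm (x - z) <= enorm (x - z0) + enorm (z0 - z).
  by have := enormD (x - z0) (z0 - z); rewrite addrA subrK.
have H3 : enorm (z0 - z) <= e.
  apply: le_trans (enorm_le_norm _) _.
  have dp : 0 < d%:R + 1 :> R by rewrite ltr_wpDl.
  rewrite ltr_pdivlMr // in hz.
  have : `|z0 - z| * d%:R <= `|z0 - z| * (d%:R + 1) by rewrite ler_wpM2l // lerDl.
  have := normr_ge0 (z0 - z); nra.
rewrite (enormB z z0) in H1.
rewrite ler_norml; apply/andP; split; lra.
Qed.

Lemma convex_continuous (g : vec -> R) : convex_fun g -> continuous g.
Proof.
move=> cg; apply: cont_of_eps => z0 e e0.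
have [M HM] := convex_local z0 cg.
have K0 : 0 <= M - g z0.
  have := HM 1 0 ltr01 (lexx _); rewrite addr0 subrr normr0 mul1r; apply.
  by move=> j; rewrite mxE normr0.
set K := M - g z0 in K0 HM.
have Kp : 0 < K + 1 by lra.
set del := Num.min 1 (e / (K + 1)).
have dp : 0 < del by rewrite lt_min ltr01 divr_gt0.
have d1 : del <= 1 by rewrite ge_min lexx.
have d2 : del <= e / (K + 1) by rewrite ge_min lexx orbT.
exists del => // z hz.
have := HM del (z - z0) dp d1.
have hj : forall j, `|(z - z0) 0 j| <= del.
  move=> j; apply: le_trans (coord_le_norm _ j) _.
  by rewrite distrC ltW.
move=> /(_ hj); rewrite subrKC distrC => H. 
apply: le_trans H _.
have : del * K <= e / (K + 1) * K by rewrite ler_wpM2r.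
have : e / (K + 1) * K <= e.
  rewrite mulrAC ler_pdivrMr // ler_wpM2l ?ltW //; lra.
lra.
Qed.

Lemma nearest_exists (g : vec -> R) (eps Rad : R) x : convex_fun g -> 0 <= eps ->
  sublevel g 0 `<=` ball_set Rad -> (exists y, g y <= - eps) ->
  exists p, g p <= - eps /\ forall z, g z <= - eps -> enorm (x - p) <= enorm (x - z).
Proof.
move=> cg e0 sub [y0 hy0].
set A := [set z : vec | g z <= - eps].
have A0 : A !=set0 by exists y0.
have cA : compact A.
  apply: bounded_closed_compact.
    exists Rad; split; first exact: num_real.
    move=> M HM z Az; apply: le_trans (norm_le_enorm z) _.
    have : ball_set Rad z by apply: sub; rewrite /sublevel /=; rewrite /A /= in Az; lra.
    by rewrite /ball_set /= => h; apply: le_trans h (ltW HM).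
  apply: (@preimage_closed _ _ g [set r : R | r <= - eps]).
    by move=> z _; exact: convex_continuous.
  exact: closed_le.
have [p pA pmin] := EVT_min_rV A0 cA (continuous_subspaceT (@cont_enorm x)).
exists p; split; first by move: pA; rewrite inE.
by move=> z hz; apply: pmin; rewrite inE.
Qed.

End Topo.


Section Step.
Variables (R : realType) (d : nat).
Local Notation vec := 'rV[R]_d.
Implicit Types u v w z x y p s h : vec.

Lemma error_bound_rho (g : vec -> R) (eps rho sigma Rad : R) x : convex_fun g ->
  0 <= rho -> rho <= eps -> sublevel g 0 `<=` ball_set Rad ->
  (exists y, g y = - eps) ->
  (forall y v, g y = - eps -> subgrad g y v -> sigma <= enorm v) ->
  0 < sigma -> - rho < g x -> sigma * dist x (sublevel g rho) <= g x + rho.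
Proof.
move=> cg r0 re sub [y0 hy0] A4 s0 gx.
have ey : exists y, g y <= - eps by exists y0; rewrite hy0.
have [p [gp pmin]] := nearest_exists x cg (le_trans r0 re) sub ey.
have gxe : - eps < g x by lra.
have eb := error_bound_eps cg gxe gp pmin A4.
set l := (g x + rho) / (g x + eps).
have den : 0 < g x + eps by lra.
have l01 : 0 <= l <= 1.
  by apply/andP; split; [rewrite divr_ge0 // ltW //; lra | rewrite ler_pdivrMr // mul1r; lra].
have gq : g (l *: p + (1 - l) *: x) <= - rho.
  apply: le_trans (cg _ _ _ l01) _.
  have E : l * (g x + eps) = g x + rho by rewrite /l divfK // gt_eqF.
  move: l01 => /andP [l0 l1]; nra.
have := dist_le x (gq : sublevel g rho _).
have -> : x - (l *: p + (1 - l) *: x) = l *: (x - p).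
  by apply/rowP => j; rewrite !mxE; ring.
rewrite enormZ ger0_norm; last by case/andP: l01.
move=> hd.
have E : l * (g x + eps) = g x + rho by rewrite /l divfK // gt_eqF.
move: l01 => /andP [l0 l1].
have := enorm_ge0 (x - p).
nra.
Qed.

Lemma one_step (g : vec -> R) (eps rho sigma Rad Gg eta Gf : R) x s gf P :
  convex_fun g -> 0 <= rho -> rho <= eps -> sublevel g 0 `<=` ball_set Rad ->
  (exists y, g y = - eps) ->
  (forall y v, g y = - eps -> subgrad g y v -> sigma <= enorm v) ->
  0 < sigma -> 0 < Gg ->
  (forall y v, enorm y <= Rad -> subgrad g y v -> enorm v <= Gg) ->
  0 <= eta -> enorm x <= Rad -> subgrad g x s -> enorm gf <= Gf ->
  is_proj (ball_set Rad) (polyak_pre g eta rho x gf s) P ->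
  dist P (sublevel g rho) <=
    Num.sqrt (1 - sigma ^+ 2 / Gg ^+ 2) * dist x (sublevel g rho) + eta * Gf.
Proof.
move=> cg r0 re sub [y0 hy0] A4 s0 G0 A3 eta0 xb sg gfb prj.
set Y := sublevel g rho.
have Yn : Y !=set0 by exists y0; rewrite /Y /sublevel /= hy0; lra.
have Ysub : forall y, Y y -> enorm y <= Rad.
  by move=> y Yy; apply: sub; rewrite /sublevel /=; move: Yy; rewrite /Y /sublevel /=; lra.
set z' := polyak_pre g eta rho x gf s.
have st1 : dist P Y <= dist z' Y.
  rewrite -[dist z' Y]addr0; apply: dist_transfer => // y Yy.
  by rewrite addr0; apply: proj_ball_nonexp prj (Ysub _ Yy).
have D0 := dist_ge0 x Yn.
have egf : enorm (eta *: gf) <= eta * Gf.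
  by rewrite enormZ ger0_norm // ler_wpM2l.
apply: le_trans st1 _.
have [s0'|sn0] := eqVneq s 0.
  have xY : Y x.
    rewrite /Y /sublevel /=; have := sg y0; rewrite s0' dotp0l addr0 hy0; lra.
  have -> : dist x Y = 0 by apply: dist_mem.
  rewrite mulr0 add0r -[eta * Gf]add0r -(dist_mem xY).
  apply: dist_transfer => // y Yy.
  have -> : z' = x - eta *: gf by rewrite /z' /polyak_pre s0' eqxx.
  have := enormD (x - y) (- (eta *: gf)); rewrite enormN.
  have -> : x - y + - (eta *: gf) = x - eta *: gf - y by rewrite addrAC.
  lra.
have S0 : 0 < dotp s s.
  rewrite lt_neqAle dotp_ge0 andbT; apply/eqP => /esym /dotp_eq0 /eqP.
  by rewrite (negbTE sn0).
set a := g x + rho.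
set w := x - (pos_part a / dotp s s) *: s.
have zw : enorm (z' - w) <= eta * Gf.
  have := @halfspace_nonexp _ _ a x (x - eta *: gf) s S0.
  have -> : x - eta *: gf - x = - (eta *: gf) by rewrite addrC addKr.
  rewrite enormN => H; apply: le_trans _ egf; apply: le_trans _ H.
  rewrite /z' /polyak_pre sn0 /w /a.
  by rewrite [x - eta *: gf - x]addrAC subrr add0r [g x + _ + rho]addrAC.
have st2 : dist z' Y <= dist w Y + eta * Gf.
  apply: dist_transfer => // y Yy.
  have := enormD (w - y) (z' - w).
  have -> : w - y + (z' - w) = z' - y by rewrite addrC addrA subrK.
  lra.
apply: le_trans st2 _; rewrite lerD2r.
set gam := 1 - sigma ^+ 2 / Gg ^+ 2.
have [a0|a0] := lerP a 0.
  have xY : Y x by rewrite /Y /sublevel /=; rewrite /a in a0; lra.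
  have -> : w = x by rewrite /w ((pos_partE _).2 a0) mul0r scale0r subr0.
  by rewrite (dist_mem xY) mulr0.
have Dx : sigma * dist x Y <= a.
  apply: error_bound_rho cg r0 re sub _ A4 s0 _; first by exists y0.
  by rewrite /a in a0; lra.
have Dw0 := dist_ge0 w Yn.
set K := pos_part a ^+ 2 / dotp s s.
have pa : pos_part a = a by rewrite ((pos_partE _).1 (ltW a0)).
have SG : dotp s s <= Gg ^+ 2.
  by have hs := A3 x s xb sg; rewrite -enorm_sq ler_pXn2r // ?nnegrE ?enorm_ge0 ?(ltW G0).
have K1 : sigma ^+ 2 / Gg ^+ 2 * dist x Y ^+ 2 <= K.
  rewrite /K pa.
  have h1 : (sigma * dist x Y) ^+ 2 <= a ^+ 2.
    by rewrite ler_pXn2r // ?nnegrE ?(mulr_ge0 (ltW s0) D0) ?(ltW a0).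
  have Gp : 0 < Gg ^+ 2 by rewrite exprn_gt0.
  have ap : 0 < a ^+ 2 by rewrite exprn_gt0.
  apply: (@le_trans _ _ (a ^+ 2 / Gg ^+ 2)).
    by rewrite mulrAC -exprMn ler_pM2r // invr_gt0.
  by rewrite ler_pM2l // lef_pV2.
have K0 : 0 <= K by rewrite /K divr_ge0 ?sqr_ge0 ?ltW.
have key : Num.sqrt (dist w Y ^+ 2 + K) <= dist x Y.
  apply: dist_lb => // y Yy.
  have hc := @polyak_contr _ _ g rho x s y S0 sg Yy.
  rewrite -/a -/w -/K in hc.
  rewrite [X in _ <= X]/enorm ler_sqrt ?dotp_ge0 //.
  have := dist_le w Yy; move: (enorm_ge0 (w - y)) => e0 hd.
  have : dist w Y ^+ 2 <= enorm (w - y) ^+ 2 by rewrite ler_pXn2r ?nnegrE.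
  rewrite enorm_sq; lra.
have key2 : dist w Y ^+ 2 <= gam * dist x Y ^+ 2.
  have : dist w Y ^+ 2 + K <= dist x Y ^+ 2.
    have := key; rewrite -(ler_pXn2r (n:=2)) ?nnegrE ?sqrtr_ge0 //.
    by rewrite sqr_sqrtr // addr_ge0 ?sqr_ge0.
  rewrite /gam; lra.
have gam0 : 0 <= gam * dist x Y ^+ 2 by apply: le_trans key2; rewrite sqr_ge0.
have [gp|gn] := lerP 0 gam.
  rewrite -(ler_pXn2r (n:=2)) ?nnegrE ?mulr_ge0 ?sqrtr_ge0 //.
  by rewrite exprMn sqr_sqrtr.
rewrite (ler0_sqrtr (ltW gn)) mul0r.
have h2 : gam * dist x Y ^+ 2 <= 0.
  have := sqr_ge0 (dist x Y); nra.
have : dist w Y ^+ 2 <= 0 by lra.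
rewrite expr2 => h; nra.
Qed.


End Step.

End Helpers2.
Import Helpers Helpers2.

Theorem mainTheorem10 (R : realType) (d T : nat)
  (g : 'rV[R]_d -> R) (f : nat -> 'rV[R]_d -> R) (gradf : nat -> 'rV[R]_d -> 'rV[R]_d)
  (Rad Gf Gg sigma eps eta rho : R)
  (x : nat -> 'rV[R]_d) (s : nat -> 'rV[R]_d) :
  (0 < d)%N -> (0 < T)%N ->
  convex_fun g ->
  (* (A1) *)
  0 < Rad -> sublevel g 0 `<=` ball_set Rad ->
  (* (A2) *)
  0 < Gf ->
  (forall t, (1 <= t <= T)%N -> convex_fun (f t) /\ differentiable_fun (f t)) ->
  (forall t y, (1 <= t <= T)%N -> is_gradient (f t) y (gradf t y)) ->
  (forall t y, (1 <= t <= T)%N -> enorm y <= Rad -> enorm (gradf t y) <= Gf) ->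
  (* (A3) *)
  0 < Gg ->
  (forall y v, enorm y <= Rad -> subgrad g y v -> enorm v <= Gg) ->
  (* (A4) *)
  0 < sigma -> 0 < eps ->
  (exists y, g y = - eps) ->
  (forall y v, g y = - eps -> subgrad g y v -> sigma <= enorm v) ->
  (* algorithm *)
  enorm (x 1%N) <= Rad ->
  0 < eta -> 0 <= rho <= eps ->
  (forall t, (1 <= t <= T)%N -> subgrad g (x t) (s t)) ->
  (forall t, (1 <= t <= T)%N ->
     is_proj (ball_set Rad) (polyak_pre g eta rho (x t) (gradf t (x t)) (s t)) (x t.+1)) ->
  let gamma := 1 - sigma ^+ 2 / Gg ^+ 2 in
  forall t, (1 <= t)%N -> (t < T)%N ->
    dist (x t.+1) (sublevel g rho)
      <= Num.sqrt gamma * dist (x t) (sublevel g rho) + eta * Gf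
    /\
    dist (x t.+1) (sublevel g rho)
      <= Num.sqrt gamma ^+ t * dist (x 1%N) (sublevel g rho)
         + eta * Gf / (1 - Num.sqrt gamma).
Proof.
move=> d0 T0 cg R0 A1 Gf0 _ _ A2 G0 A3 s0 e0 ey A4 x1 eta0 /andP [r0 re] sg prj gamma.
have xb : forall t, (1 <= t <= T)%N -> enorm (x t) <= Rad.
  move=> t /andP [t1 tT]; case: t t1 tT => [//|[_ _|t _ tT]]; first exact: x1.
  by have := prj t.+1; rewrite /= (ltnW tT) => /(_ isT) [].
have step : forall t, (1 <= t <= T)%N ->
  dist (x t.+1) (sublevel g rho) <= Num.sqrt gamma * dist (x t) (sublevel g rho) + eta * Gf.
  move=> t tT.
  apply: (one_step cg r0 re A1 ey A4 s0 G0 A3 (ltW eta0) (xb t tT) (sg t tT) (A2 t _ tT (xb t tT)) (prj t tT)).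
set sgm := Num.sqrt gamma.
set c := eta * Gf.
set D := fun t => dist (x t) (sublevel g rho).
have c0 : 0 <= c by rewrite mulr_ge0 ?ltW.
have sg0 : 0 <= sgm by exact: sqrtr_ge0.
have sg1 : sgm < 1.
  rewrite /sgm -sqrtr1 ltr_sqrt // /gamma gtrDl oppr_lt0 divr_gt0 // exprn_gt0 //.
have cc : c <= c / (1 - sgm).
  by rewrite ler_pdivlMr ?subr_gt0 // ler_piMr //; lra.
have ind : forall n, (n.+1 < T)%N -> D n.+2 <= sgm ^+ n.+1 * D 1%N + c / (1 - sgm).
  elim=> [|n IH] nT.
    apply: le_trans (step 1%N _) _; first by rewrite /= ltnW.
    by rewrite expr1 lerD2l.
  apply: le_trans (step n.+2 _) _; first by rewrite /= ltnW.
  have IH' := IH (ltnW nT).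
  have E : sgm * (c / (1 - sgm)) + c = c / (1 - sgm) by field; lra.
  rewrite -E exprS -mulrA addrA lerD2r -mulrDr.
  by rewrite ler_wpM2l.
move=> t t1 tT; split; first by apply: step; rewrite t1 ltnW.
case: t t1 tT => // n _ nT; exact: ind.
Qed.
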